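(* For $1\le p<\infty$, let $\ell_p$ be the real space of sequences $x=(x_i)$ with $\|x\|_p=(\sum_i|x_i|^p)^{1/p}<\infty$. Then $S_P(\ell_p)\ge 1-2^{-\left|\frac{2}{p}-1\right|}$.
   Context: For a real Banach space $X$ with unit sphere $S_X$, the P-angle constant is $S_P(X)=\sup\left\{\frac{\|x+y\|^2+\|x-y\|^2-4}{2\|x+y\|\,\|x-y\|}: x,y\in S_X,\ x\neq \pm y\right\}$ (this is the supremum of $\cos\operatorname{ang}_P(x+y,x-y)$, where $\operatorname{ang}_P(u,v)=\arccos\frac{\|u\|^2+\|v\|^2-\|u-v\|^2}{2\|u\|\|v\|}$). *)

(* Defs.v *)
From HB Require Import structures.
From mathcomp Require Import all_boot all_order all_algebra.
From mathcomp Require Import all_classical all_reals all_analysis.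
Set Implicit Arguments. Unset Strict Implicit. Unset Printing Implicit Defensive.
Import Order.TTheory GRing.Theory Num.Theory.
Import numFieldNormedType.Exports.
Local Open Scope classical_set_scope.
Local Open Scope ring_scope.

Definition in_lp (R : realType) (p : R) (x : nat -> R) : Prop :=
  cvgn (series (fun i => `|x i| `^ p)).

Definition lp_norm (R : realType) (p : R) (x : nat -> R) : R :=
  (limn (series (fun i => `|x i| `^ p))) `^ (p^-1).

Definition P_ratio (R : realType) (nrm : (nat -> R) -> R) (x y : nat -> R) : R :=
  (nrm (x \+ y) ^+ 2 + nrm (x \- y) ^+ 2 - 4) / (2 * nrm (x \+ y) * nrm (x \- y)).

Definition SP_set_lp (R : realType) (p : R) : set R :=
  [set r | exists x y : nat -> R,
     [/\ in_lp p x /\ in_lp p y, lp_norm p x = 1 /\ lp_norm p y = 1,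
         x <> y, x <> (fun i => - y i) & r = P_ratio (lp_norm p) x y]].

(* The P-angle constant S_P(l_p) (a supremum in R; the set is nonempty and
   bounded in [-1,1]). *)
Definition SP_lp (R : realType) (p : R) : R := sup (SP_set_lp p).

(* Main.v *)
Require Import Defs.
From HB Require Import structures.
From mathcomp Require Import all_boot all_order all_algebra.
From mathcomp Require Import all_classical all_reals all_analysis.
From mathcomp Require Import ring lra.
Import Order.TTheory GRing.Theory Num.Theory.
Import numFieldNormedType.Exports.
Local Open Scope classical_set_scope.
Local Open Scope ring_scope.

Section S.
Variable R : realType.

Lemma convh (p a b : R) : 1 <= p -> 0 <= a -> 0 <= b ->
  (2^-1 * a + 2^-1 * b) `^ p <= 2^-1 * a `^ p + 2^-1 * b `^ p.
Proof.
move=> p1 a0 b0.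
rewrite {2 4}(_ : 2^-1 = 1 - 2^-1); last by rewrite {2}(splitr 1) div1r addrK.
by apply: (convex_powR p1 (Itv01 _ _)) => //=;
  rewrite ?inE/= ?in_itv/= ?andbT // ?invr_ge0// invf_le1 ?ler1n.
Qed.

Lemma convsum (p a b : R) : 1 <= p -> 0 <= a -> 0 <= b ->
  (a + b) `^ p <= 2 `^ p * 2^-1 * (a `^ p + b `^ p).
Proof.
move=> p1 a0 b0.
have -> : a + b = 2 * (2^-1 * a + 2^-1 * b).
  by rewrite -mulrDr mulrA mulfV ?mul1r.
rewrite powRM // ?addr_ge0 ?mulr_ge0 ?invr_ge0 // -mulrA.
rewrite ler_pM2l ?powR_gt0 // mulrDr.
exact: convh.
Qed.

Lemma lim_series_ge0 (u : nat -> R) : (forall n, 0 <= u n) -> cvgn (series u) ->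
  0 <= limn (series u).
Proof.
move=> u0 cu; apply: limr_ge => //; near=> n.
by rewrite /series /= sumr_ge0.
Unshelve. all: by end_near. Qed.

Lemma unit_lim (p : R) (x : nat -> R) : 0 < p -> in_lp p x -> lp_norm p x = 1 ->
  limn (series (fun i => `|x i| `^ p)) = 1.
Proof.
move=> p0 cx; rewrite /lp_norm => h.
have L0 : 0 <= limn (series (fun i => `|x i| `^ p)) by apply: lim_series_ge0 => // i; exact: powR_ge0.
have -> : limn (series (fun i => `|x i| `^ p)) = limn (series (fun i => `|x i| `^ p)) `^ (p^-1 * p).
  by rewrite mulVf ?gt_eqF // powRr1.
by rewrite powRrM h powR1.
Qed.

Lemma norm_le2 (p : R) (x y z : nat -> R) : 1 <= p -> in_lp p x -> in_lp p y ->
  lp_norm p x = 1 -> lp_norm p y = 1 ->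
  (forall i, `|z i| <= `|x i| + `|y i|) -> lp_norm p z <= 2.
Proof.
move=> p1 cx cy nx ny hz.
have p0 : 0 < p by apply: lt_le_trans p1.
set w := fun i => 2 `^ p * 2^-1 * (`|x i| `^ p + `|y i| `^ p).
have hw : forall i, `|z i| `^ p <= w i.
  move=> i; rewrite /w. apply: (le_trans _ (convsum _ _ _ p1 (normr_ge0 (x i)) (normr_ge0 (y i)))).
  by apply: ge0_ler_powR => //; rewrite ?nnegrE ?addr_ge0 // ltW.
have cw : cvgn (series w).
  rewrite /w; have -> : (fun i => 2 `^ p * 2^-1 * (`|x i| `^ p + `|y i| `^ p)) =
    (2 `^ p * 2^-1) *: ((fun i => `|x i| `^ p) + (fun i => `|y i| `^ p)) by [].
  by apply: is_cvg_seriesZ; apply: is_cvg_seriesD.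
have cz : cvgn (series (fun i => `|z i| `^ p)).
  apply: series_le_cvg cw => // n.
  by rewrite /w mulr_ge0 ?addr_ge0 ?powR_ge0 ?mulr_ge0 ?invr_ge0.
have lw : limn (series w) = 2 `^ p.
  rewrite /w; have -> : (fun i => 2 `^ p * 2^-1 * (`|x i| `^ p + `|y i| `^ p)) =
    (2 `^ p * 2^-1) *: ((fun i => `|x i| `^ p) + (fun i => `|y i| `^ p)) by [].
  rewrite lim_seriesZ; last exact: is_cvg_seriesD.
  rewrite lim_seriesD // !unit_lim // /GRing.scale /=.
  by rewrite -mulrA (_ : 1 + 1 = 2) // mulVf ?mulr1.
have le := lim_series_le cz cw hw; rewrite lw in le.
rewrite /lp_norm; apply: le_trans (ge0_ler_powR _ _ _ le) _.
- by rewrite invr_ge0 ltW.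
- by rewrite nnegrE lim_series_ge0 // => i; exact: powR_ge0.
- by rewrite nnegrE powR_ge0.
by rewrite -powRrM mulfV ?gt_eqF // powRr1.
Qed.

Lemma ratio_le1 (a b : R) : 0 <= a -> a <= 2 -> 0 <= b -> b <= 2 ->
  (a ^+ 2 + b ^+ 2 - 4) / (2 * a * b) <= 1.
Proof.
move=> a0 a2 b0 b2.
have [ab0|abn0] := eqVneq (2 * a * b) 0.
  by rewrite ab0 invr0 mulr0.
have abp : 0 < 2 * a * b by rewrite lt_neqAle eq_sym abn0 !mulr_ge0.
rewrite ler_pdivrMr // mul1r.
nra.
Qed.

Lemma SP_ub (p : R) : 1 <= p -> forall r, SP_set_lp p r -> r <= 1.
Proof.
move=> p1 r [x [y [[cx cy] [nx ny] _ _ ->]]].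
have ge0 : forall z, 0 <= lp_norm p z by move=> z; exact: powR_ge0.
rewrite /P_ratio; apply: ratio_le1; rewrite ?ge0 //.
  apply: (@norm_le2 p x y _ p1 cx cy nx ny) => i; exact: ler_normD.
apply: (@norm_le2 p x y _ p1 cx cy nx ny) => i.
by rewrite /= (le_trans (ler_normB _ _)).
Qed.

Lemma SP_has_ub (p : R) : 1 <= p -> has_ubound (SP_set_lp p).
Proof. by move=> p1; exists 1 => r /SP_ub; apply. Qed.

Definition tp (a b : R) : nat -> R :=
  fun i => if i == 0%N then a else if i == 1%N then b else 0.

Lemma tp_cvg (p a b : R) : 0 < p ->
  series (fun i => `|tp a b i| `^ p) @ \oo --> (`|a| `^ p + `|b| `^ p).
Proof.
move=> p0; apply: cvg_near_cst; exists 2%N => // n /= hn.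
rewrite /series /= -(subnKC hn) !big_nat_recl //= big1 ?addr0 //.
by move=> i _; rewrite /tp /= normr0 powR0 // gt_eqF.
Qed.

Lemma tp_in (p a b : R) : 0 < p -> in_lp p (tp a b).
Proof. by move=> p0; apply/cvg_ex; eexists; exact: tp_cvg. Qed.

Lemma tp_norm (p a b : R) : 0 < p ->
  lp_norm p (tp a b) = (`|a| `^ p + `|b| `^ p) `^ p^-1.
Proof. by move=> p0; rewrite /lp_norm (cvg_lim _ (@tp_cvg p a b p0)). Qed.

Lemma tp_norm_l (p a : R) : 0 < p -> 0 <= a -> lp_norm p (tp a 0) = a.
Proof.
move=> p0 a0; rewrite tp_norm // normr0 powR0 ?gt_eqF // addr0 ger0_norm //.
by rewrite -powRrM mulfV ?gt_eqF // powRr1.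
Qed.

Lemma tp_norm_r (p a : R) : 0 < p -> 0 <= a -> lp_norm p (tp 0 a) = a.
Proof.
move=> p0 a0; rewrite tp_norm // normr0 powR0 ?gt_eqF // add0r ger0_norm //.
by rewrite -powRrM mulfV ?gt_eqF // powRr1.
Qed.

Lemma tp_add (a b c d : R) : tp a b \+ tp c d = tp (a + c) (b + d).
Proof. by apply/funext => -[|[|i]] //=; rewrite /tp /= addr0. Qed.

Lemma tp_sub (a b c d : R) : tp a b \- tp c d = tp (a - c) (b - d).
Proof. by apply/funext => -[|[|i]] //=; rewrite /tp /= subr0. Qed.
End S.
Arguments tp {R}.
Arguments tp_in {R}.
Arguments tp_norm {R}.
Arguments tp_norm_l {R}.
Arguments tp_norm_r {R}.
Arguments tp_add {R}.
Arguments tp_sub {R}.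

Theorem mainTheorem2 (R : realType) (p : R) (hp : 1 <= p) :
  1 - (2 : R) `^ (- `|2 / p - 1|) <= SP_lp p.
Proof.
have p0 : 0 < p by apply: lt_le_trans hp.
set t := (2 : R) `^ p^-1.
have t0 : 0 < t by rewrite powR_gt0.
have t2 : (2 : R) `^ (2 / p) = t * t.
  by rewrite -powRD ?pnatr_eq0 ?implybT // -mulr2n mulr_natl.
have key : forall r, SP_set_lp p r -> forall v, v <= r -> v <= SP_lp p.
  move=> r Hr v le; apply: (le_trans le). rewrite /SP_lp; exact: (ub_le_sup (@SP_has_ub R p hp) Hr).
have [c0|c0] := leP 0 (2 / p - 1).
- rewrite ger0_norm //.
  have e : (2 : R) `^ (- (2 / p - 1)) = 2 / (t * t).
    rewrite (_ : - (2 / p - 1) = 1 - 2 / p); last by rewrite opprB.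
    by rewrite powRB ?pnatr_eq0 ?implybT // powRr1 // t2.
  rewrite e.
  apply: (key (P_ratio (lp_norm p) (tp 1 0) (tp 0 1)) _ _ _).
    exists (tp 1 0), (tp 0 1); split => //.
    + by split; apply: tp_in.
    + by split; [apply: tp_norm_l | apply: tp_norm_r].
    + by move/(congr1 (fun f => f 0%N)); rewrite /tp /= => /eqP; rewrite oner_eq0.
    + by move/(congr1 (fun f => f 0%N)); rewrite /tp /= oppr0 => /eqP; rewrite oner_eq0.
  rewrite /P_ratio tp_add tp_sub !tp_norm // addr0 add0r subr0 add0r normrN.
  rewrite normr1 powR1 -/t.
  suff -> : (t ^+ 2 + t ^+ 2 - 4) / (2 * t * t) = 1 - 2 / (t * t) by [].
  by field; rewrite gt_eqF.
- rewrite ltr0_norm // opprK.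
  set h := t^-1.
  have h0 : 0 < h by rewrite invr_gt0.
  have hp1 : h `^ p = 2^-1.
    by rewrite /h /t -powRN -powRrM mulNr mulVf ?gt_eqF // powR_inv1.
  have e : (2 : R) `^ (2 / p - 1) = t * t / 2.
    by rewrite powRB ?pnatr_eq0 ?implybT // powRr1 // t2.
  rewrite e.
  apply: (key (P_ratio (lp_norm p) (tp h h) (tp h (- h))) _ _ _).
    exists (tp h h), (tp h (- h)); split => //.
    + by split; apply: tp_in.
    + have h11 : (2^-1 + 2^-1 : R) = 1 by rewrite {3}(splitr 1) div1r.
      by split; rewrite tp_norm // ?normrN ger0_norm ?(ltW h0) // hp1 h11 powR1.
    + move/(congr1 (fun f => f 1%N)); rewrite /tp /= => /eqP.
      by rewrite -subr_eq0 opprK -mulr2n mulrn_eq0 /= gt_eqF.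
    + move/(congr1 (fun f => f 0%N)); rewrite /tp /= => /eqP.
      by rewrite -subr_eq0 opprK -mulr2n mulrn_eq0 /= gt_eqF.
  rewrite /P_ratio tp_add tp_sub subrr opprK.
  have hh : 0 <= h + h by rewrite addr_ge0 // ltW.
  rewrite tp_norm_l // tp_norm_r //.
  suff -> : ((h + h) ^+ 2 + (h + h) ^+ 2 - 4) / (2 * (h + h) * (h + h)) = 1 - t * t / 2 by [].
  by rewrite /h; field; rewrite gt_eqF.
Qed.
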